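(* Let $N\ge 1$ and $n\ge 1$ be integers, and let $x>1$ and $1\le y<2$ be real numbers. Let $\mathcal{S}_0,\dots,\mathcal{S}_{n-1}$ be nonempty sets of QPSK sequences of length $N$ such that, for every $0\le i\le n-1$: (a) $\mathrm{PEP}(\mathbf{s})\le x\,y^{2i}N$ for every $\mathbf{s}\in\mathcal{S}_i$; and (b) if $\mathbf{s}\in\mathcal{S}_i$ then $j^m\mathbf{s}\in\mathcal{S}_i$ for every $m\in\mathbb{Z}_4$. Let $\mathbf{a}$ be the $2^{2n}$-QAM sequence associated with $(\mathbf{s}_0,\dots,\mathbf{s}_{n-1})$, where $\mathbf{s}_i\in\mathcal{S}_i$ for all $i$. Then $$\mathrm{PEP}(\mathbf{a})\le 2^{2n-3}\left(\frac{1-(\frac{y}{2})^{n}}{1-\frac{y}{2}}\right)^2\cdot x\cdot N.$$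
   Context: Let $j=\sqrt{-1}$. Fix $T>0$ and reals $f_0,\Delta f$ with $T\Delta f$ a positive integer; set $f_k=f_0+k\Delta f$. For a complex sequence $\mathbf{a}=(a_0,\dots,a_{N-1})$ define $S_{\mathbf{a}}(t)=\sum_{k=0}^{N-1}a_ke^{2\pi j f_k t}$, $P_{\mathbf{a}}(t)=|S_{\mathbf{a}}(t)|^2$, and $\mathrm{PEP}(\mathbf{a})=\sup_{t\in[0,T]}P_{\mathbf{a}}(t)$. A QPSK sequence of length $N$ is a sequence $\mathbf{s}=(s_0,\dots,s_{N-1})$ with every $s_k\in\{1,j,-1,-j\}$; $j^m\mathbf{s}=(j^ms_0,\dots,j^ms_{N-1})$. The $2^{2n}$-QAM sequence associated with QPSK sequences $\mathbf{s}_0,\dots,\mathbf{s}_{n-1}$, $\mathbf{s}_i=(s_{i,0},\dots,s_{i,N-1})$, is $\mathbf{a}=(a_0,\dots,a_{N-1})$ with $a_k=\frac{\sqrt2}{2}e^{\pi j/4}\sum_{i=0}^{n-1}2^{n-1-i}s_{i,k}$. *)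

(* Defs.v *)
From Stdlib Require Import Reals.
From Coquelicot Require Import Coquelicot.
Open Scope R_scope.

Definition cj : C := (0, 1).

Definition cexpi (theta : R) : C := (cos theta, sin theta).

(* j^m for an integer m (here m ranges over Z_4 via nat m < 4, see statement) *)
Fixpoint cjpow (m : nat) : C :=
  match m with O => 1%C | S m' => Cmult cj (cjpow m') end.

Fixpoint Csum (f : nat -> C) (n : nat) : C :=
  match n with O => 0%C | S n' => Cplus (Csum f n') (f n') end.

(* complex sequences of length N are modelled as nat -> C, only indices < N matter *)

Definition freq (f0 df : R) (k : nat) : R := f0 + INR k * df.

Definition Ssig (N : nat) (f0 df : R) (a : nat -> C) (t : R) : C :=
  Csum (fun k => Cmult (a k) (cexpi (2 * PI * freq f0 df k * t))) N.

Definition Ppow (N : nat) (f0 df : R) (a : nat -> C) (t : R) : R :=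
  (Cmod (Ssig N f0 df a t)) ^ 2.

Definition PEP (N : nat) (T f0 df : R) (a : nat -> C) : Rbar :=
  Lub_Rbar (fun v => exists t, 0 <= t <= T /\ v = Ppow N f0 df a t).

Definition isQPSK (N : nat) (s : nat -> C) : Prop :=
  forall k, (k < N)%nat -> s k = 1%C \/ s k = cj \/ s k = Copp 1%C \/ s k = Copp cj.

Definition jscale (m : nat) (s : nat -> C) : nat -> C := fun k => Cmult (cjpow m) (s k).

Definition QAM (n : nat) (s : nat -> nat -> C) : nat -> C :=
  fun k => Cmult (Cmult (RtoC (sqrt 2 / 2)) (cexpi (PI / 4)))
                 (Csum (fun i => Cmult (RtoC (2 ^ (n - 1 - i))) (s i k)) n).

(* Main.v *)
Require Import Defs.
From Stdlib Require Import Reals.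
From Coquelicot Require Import Coquelicot.
From Stdlib Require Import Lra Lia Psatz.
Open Scope R_scope.

Fixpoint Rs (f : nat -> R) (n : nat) : R :=
  match n with O => 0 | S n' => Rs f n' + f n' end.

Lemma Csum_ext f g n : (forall k, (k < n)%nat -> f k = g k) -> Csum f n = Csum g n.
Proof. induction n; simpl; intros H; auto. rewrite IHn, H; auto. Qed.

Lemma Csum_plus f g n : Csum (fun k => Cplus (f k) (g k)) n = Cplus (Csum f n) (Csum g n).
Proof. induction n; simpl. ring. rewrite IHn. ring. Qed.

Lemma Csum_scal c f n : Csum (fun k => Cmult c (f k)) n = Cmult c (Csum f n).
Proof. induction n; simpl. ring. rewrite IHn. ring. Qed.

Lemma Csum_exch (g : nat -> nat -> C) N n :
  Csum (fun k => Csum (fun i => g i k) n) N = Csum (fun i => Csum (fun k => g i k) N) n.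
Proof.
  induction N; simpl.
  - clear. induction n; simpl; auto. rewrite <- IHn. ring.
  - rewrite IHN. rewrite <- Csum_plus. reflexivity.
Qed.

Lemma Cmod_Csum f n : Cmod (Csum f n) <= Rs (fun k => Cmod (f k)) n.
Proof.
  induction n; simpl. rewrite Cmod_0; lra.
  eapply Rle_trans. apply Cmod_triangle. lra.
Qed.

Lemma Rs_le f g n : (forall k, (k < n)%nat -> f k <= g k) -> Rs f n <= Rs g n.
Proof. induction n; simpl; intros H. lra. assert (f n <= g n) by auto. 
  assert (Rs f n <= Rs g n) by auto. lra. Qed.

Lemma Rs_ext f g n : (forall k, (k < n)%nat -> f k = g k) -> Rs f n = Rs g n.
Proof. induction n; simpl; intros H; auto. rewrite IHn, H; auto. Qed.

Lemma Rs_scal c f n : Rs (fun k => c * f k) n = c * Rs f n.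
Proof. induction n; simpl. ring. rewrite IHn. ring. Qed.

Lemma Rs_geom q n : Rs (fun i => q ^ i) n * (1 - q) = 1 - q ^ n.
Proof. induction n; simpl. ring. rewrite Rmult_plus_distr_r, IHn. ring. Qed.

Lemma Cmod_cexpi th : Cmod (cexpi th) = 1.
Proof. unfold Cmod, cexpi; simpl. pose proof (sin2_cos2 th) as H. unfold Rsqr in H.
  replace (cos th * (cos th * 1) + sin th * (sin th * 1)) with 1 by lra. apply sqrt_1. Qed.

Theorem lemma1
  (T f0 df : R) (HT : 0 < T)
  (HTdf : exists p : nat, (0 < p)%nat /\ T * df = INR p)
  (N n : nat) (HN : (1 <= N)%nat) (Hn : (1 <= n)%nat)
  (x y : R) (Hx : 1 < x) (Hy : 1 <= y < 2)
  (Sset : nat -> (nat -> C) -> Prop)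
  (Hne : forall i, (i < n)%nat -> exists s, Sset i s)
  (HQ : forall i s, (i < n)%nat -> Sset i s -> isQPSK N s)
  (Ha : forall i s, (i < n)%nat -> Sset i s ->
          Rbar_le (PEP N T f0 df s) (Finite (x * y ^ (2 * i) * INR N)))
  (Hb : forall i s m, (i < n)%nat -> Sset i s -> (m < 4)%nat -> Sset i (jscale m s))
  (s : nat -> nat -> C) (Hs : forall i, (i < n)%nat -> Sset i (s i)) :
  Rbar_le (PEP N T f0 df (QAM n s))
    (Finite (2 ^ (2 * n) / 8 * ((1 - (y / 2) ^ n) / (1 - y / 2)) ^ 2 * x * INR N)).
Proof.
  set (c := Cmult (RtoC (sqrt 2 / 2)) (cexpi (PI / 4))).
  set (w := fun i => 2 ^ (n - 1 - i)).
  set (G := Rs (fun i => (y / 2) ^ i) n).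
  assert (HG : G = (1 - (y / 2) ^ n) / (1 - y / 2)).
  { unfold G. rewrite <- Rs_geom. field. lra. }
  assert (HNpos : 0 < INR N) by (apply lt_0_INR; lia).
  assert (HxN : 0 <= x * INR N) by nra.
  set (A := sqrt 2 / 2 * (sqrt (x * INR N) * 2 ^ (n - 1) * G)).
  assert (Hi : forall i t, (i < n)%nat -> 0 <= t <= T ->
            Cmod (Ssig N f0 df (s i) t) <= sqrt (x * INR N) * y ^ i).
  { intros i t Hin Ht.
    pose proof (Ha i (s i) Hin (Hs i Hin)) as H1.
    destruct (Lub_Rbar_correct (fun v => exists t, 0 <= t <= T /\ v = Ppow N f0 df (s i) t)) as [Hub _].
    assert (H2 : Rbar_le (Finite (Ppow N f0 df (s i) t)) (PEP N T f0 df (s i))).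
    { apply Hub. exists t; auto. }
    pose proof (Rbar_le_trans _ _ _ H2 H1) as H3. simpl in H3.
    unfold Ppow in H3.
    assert (Hb2 : (sqrt (x * INR N) * y ^ i) ^ 2 = x * y ^ (2 * i) * INR N).
    { rewrite Rpow_mult_distr. rewrite pow2_sqrt by auto.
      rewrite pow_mult. rewrite <- (pow_mult y 2 i), <- (pow_mult y i 2).
      rewrite Nat.mul_comm. ring. }
    pose proof (Cmod_ge_0 (Ssig N f0 df (s i) t)).
    assert (0 <= sqrt (x * INR N) * y ^ i).
    { apply Rmult_le_pos. apply sqrt_pos. apply pow_le; lra. }
    replace (i + (i + 0))%nat with (2 * i)%nat in H3 by lia. rewrite <- Hb2 in H3.
    revert H H0 H3. generalize (Cmod (Ssig N f0 df (s i) t)) (sqrt (x * INR N) * y ^ i). intros a b Ha0 Hb0 Hab. nra. }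
  assert (Hw : forall i, (i < n)%nat -> w i * y ^ i = 2 ^ (n - 1) * (y / 2) ^ i).
  { intros i Hin. unfold w.
    replace (n - 1)%nat with ((n - 1 - i) + i)%nat at 2 by lia.
    rewrite pow_add.
    replace (y ^ i) with ((y / 2 * 2) ^ i) by (f_equal; field).
    rewrite Rpow_mult_distr. ring. }
  destruct (Lub_Rbar_correct (fun v => exists t, 0 <= t <= T /\ v = Ppow N f0 df (QAM n s) t)) as [_ Hlub].
  apply Hlub. intros v [t [Ht ->]]. simpl.
  assert (Heq : Ssig N f0 df (QAM n s) t =
    Cmult c (Csum (fun i => Cmult (RtoC (w i)) (Ssig N f0 df (s i) t)) n)).
  { unfold Ssig, QAM. fold c.
    transitivity (Csum (fun k => Cmult c (Csum (fun i => Cmult (RtoC (w i))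
        (Cmult (s i k) (cexpi (2 * PI * freq f0 df k * t)))) n)) N).
    { apply Csum_ext. intros k _.
      rewrite <- Cmult_assoc. f_equal. rewrite Cmult_comm, <- Csum_scal.
      apply Csum_ext. intros i _. unfold w. ring. }
    rewrite Csum_scal. f_equal. rewrite Csum_exch. apply Csum_ext. intros i _.
    apply Csum_scal. }
  assert (HC : Cmod (Ssig N f0 df (QAM n s) t) <= A).
  { rewrite Heq. unfold c. rewrite !Cmod_mult, Cmod_cexpi, Cmod_R.
    rewrite Rabs_right. 2:{ apply Rle_ge. apply Rmult_le_pos. apply sqrt_pos. lra. }
    unfold A. rewrite Rmult_1_r. apply Rmult_le_compat_l.
    { apply Rmult_le_pos. apply sqrt_pos. lra. }
    eapply Rle_trans. apply Cmod_Csum.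
    unfold G. rewrite <- !Rs_scal. apply Rs_le. intros i Hin.
    rewrite Cmod_mult, Cmod_R, Rabs_right.
    2:{ apply Rle_ge. unfold w. apply pow_le. lra. }
    rewrite Rmult_assoc, <- Hw by auto.
    pose proof (Hi i t Hin Ht).
    assert (0 <= w i) by (unfold w; apply pow_le; lra). nra. }
  unfold Ppow.
  assert (HA0 : 0 <= A).
  { pose proof (Cmod_ge_0 (Ssig N f0 df (QAM n s) t)). lra. }
  pose proof (Cmod_ge_0 (Ssig N f0 df (QAM n s) t)).
  apply Rle_trans with (A ^ 2). nra.
  right. unfold A. rewrite <- HG.
  destruct n as [|m]; [lia|].
  replace (S m - 1)%nat with m by lia.
  replace (2 * S m)%nat with (S (S (m + m))) by lia.
  rewrite !Rpow_mult_distr. rewrite pow2_sqrt by auto.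
  replace ((sqrt 2 / 2) ^ 2) with (/ 2).
  2:{ unfold Rdiv. rewrite Rpow_mult_distr, pow2_sqrt by lra. field. }
  rewrite pow_add. simpl. rewrite Nat.add_0_r. field.
Qed.
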